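(* Let $\mathbb F$ be algebraically closed with $\operatorname{char}\mathbb F\ne2$, $a,b,c\in\mathbb F$, $d\in\mathbb N$. The $\Re$-module $R_d(a,b,c)$ is irreducible if and only if both (i) $\operatorname{char}\mathbb F=0$ or $\operatorname{char}\mathbb F>d$, and (ii) none of $a+b+c+1$, $-a+b+c$, $a-b+c$, $a+b-c$ lies in $\{\tfrac d2-i\mid i=1,2,\dots,d\}$.
   Context: The Racah algebra $\Re$ is the unital associative $\mathbb F$-algebra with generators $A,B,C,D$ and relations $[A,B]=[B,C]=[C,A]=2D$ together with the requirement that each of $\alpha:=[A,D]+AC-BA$, $\beta:=[B,D]+BA-CB$, $\gamma:=[C,D]+CB-AC$ is central in $\Re$; $\delta:=A+B+C$. For $a,b,c\in\mathbb F$ and $d\in\mathbb N$ set $\theta_i=(a+\tfrac d2-i)(a+\tfrac d2-i+1)$, $\theta_i^*=(b+\tfrac d2-i)(b+\tfrac d2-i+1)$, $\varphi_i=i(i-d-1)(a+b+c+\tfrac d2-i+2)(a+b-c+\tfrac d2-i+1)$. $R_d(a,b,c)$ denotes the $(d+1)$-dimensional $\Re$-module with a basis $v_0,\dots,v_d$ such that $Av_i=\theta_iv_i+v_{i+1}$ ($v_{d+1}=0$), $Bv_i=\theta_i^*v_i+\varphi_iv_{i-1}$ ($v_{-1}=0$), and $\alpha,\beta,\delta$ act as the scalars $(c-b)(c+b+1)(a-\tfrac d2)(a+\tfrac d2+1)$, $(a-c)(a+c+1)(b-\tfrac d2)(b+\tfrac d2+1)$, $\tfrac d2(\tfrac d2+1)+a(a+1)+b(b+1)+c(c+1)$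 respectively (exists, unique up to isomorphism). *)

(* Defs.v *)
From HB Require Import structures.
From mathcomp Require Import all_boot all_order all_algebra.
Set Implicit Arguments. Unset Strict Implicit. Unset Printing Implicit Defensive.
Import GRing.Theory Num.Theory.
Local Open Scope ring_scope.

(* The (d+1)-dimensional Racah-algebra module R_d(a,b,c), realised on row
   vectors 'rV[F]_(d.+1): the basis vector v_i is the i-th unit row vector
   and a generator X acts by v |-> v *m X. *)
Section Racah.
Variable F : fieldType.
Variables (a b c : F) (d : nat).

Definition rhalf : F := d%:R / 2.

Definition rth (i : nat) : F := (a + rhalf - i%:R) * (a + rhalf - i%:R + 1).
Definition rths (i : nat) : F := (b + rhalf - i%:R) * (b + rhalf - i%:R + 1).
Definition rphi (i : nat) : F :=
  i%:R * (i%:R - d%:R - 1) * (a + b + c + rhalf - i%:R + 2)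
       * (a + b - c + rhalf - i%:R + 1).

Definition RA : 'M[F]_(d.+1) :=
  \matrix_(i, j) ((if j == i :> nat then rth i else 0)
                  + (if j == i.+1 :> nat then 1 else 0)).
Definition RB : 'M[F]_(d.+1) :=
  \matrix_(i, j) ((if j == i :> nat then rths i else 0)
                  + (if j.+1 == i :> nat then rphi i else 0)).

(* scalar by which delta = A + B + C acts *)
Definition rdelta : F :=
  rhalf * (rhalf + 1) + a * (a + 1) + b * (b + 1) + c * (c + 1).

Definition RC : 'M[F]_(d.+1) := rdelta%:M - RA - RB.
Definition RD : 'M[F]_(d.+1) := 2^-1 *: (RA *m RB - RB *m RA).

Definition racah_irreducible : Prop :=
  forall U : 'M[F]_(d.+1),
    stablemx U RA -> stablemx U RB -> stablemx U RC -> stablemx U RD ->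
    U = 0 \/ row_full U.
End Racah.

(* Main.v *)
Require Import Defs.
From HB Require Import structures.
From mathcomp Require Import all_boot all_order all_algebra.
From mathcomp Require Import ring.
Set Implicit Arguments. Unset Strict Implicit. Unset Printing Implicit Defensive.
Import GRing.Theory Num.Theory.
Local Open Scope ring_scope.

Section Work.
Variables (F : fieldType) (a b c : F) (d : nat).
Local Notation n := d.+1.
Local Notation A := (RA a d).
Local Notation B := (RB a b c d).

Fact ev_key : unit. Proof. exact: tt. Qed.
Definition ev (j : nat) : 'rV[F]_n := locked_with ev_key (\row_(l < n) ((l == j :> nat)%:R)).
Lemma evE j l : ev j 0 l = ((l : nat) == j)%:R.
Proof. by rewrite /ev locked_withE mxE. Qed.
Definition ec (j : nat) : 'cV[F]_n := \col_(l < n) ((l == j :> nat)%:R).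

Lemma sum_delta (f : 'I_n -> F) (i : nat) :
  \sum_(k < n) ((k : nat) == i)%:R * f k = if (i < n)%N then f (inord i) else 0.
Proof.
case: ltnP => hi.
  rewrite (bigD1 (inord i)) //= inordK // eqxx mul1r big1 ?addr0 // => k hk.
  have -> : ((k : nat) == i) = false.
    by apply/negbTE; apply: contra hk => /eqP <-; rewrite inord_val.
  by rewrite mul0r.
rewrite big1 // => k _.
have -> : ((k : nat) == i) = false by apply/negbTE; rewrite neq_ltn (leq_trans (ltn_ord k) hi).
by rewrite mul0r.
Qed.

Lemma sum_delta' (f : 'I_n -> F) (i : nat) :
  \sum_(k < n) f k * ((k : nat) == i)%:R = if (i < n)%N then f (inord i) else 0.
Proof. by rewrite -sum_delta; apply: eq_bigr => k _; rewrite mulrC. Qed.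

Lemma evA i : ev i *m A = rth a d i *: ev i + ev i.+1.
Proof.
apply/rowP => l; rewrite !mxE.
under eq_bigr do rewrite !mxE evE.
rewrite !evE.
rewrite sum_delta; case: ltnP => hi.
  by rewrite inordK //; case: ((l:nat) =P i) => [->|_]; case: (_ == _); rewrite ?mulr1 ?mulr0 ?addr0 ?add0r.
have -> : ((l:nat) == i) = false by apply/negbTE; rewrite neq_ltn (leq_trans (ltn_ord l) hi).
have -> : ((l:nat) == i.+1) = false by apply/negbTE; rewrite neq_ltn (leq_trans (ltn_ord l)) // ltnW.
by rewrite mulr0 addr0.
Qed.

Lemma rphi0 : rphi a b c d 0 = 0.
Proof. by rewrite /rphi !mul0r. Qed.
Lemma rphiS : rphi a b c d d.+1 = 0.
Proof.
have h : ((d.+1)%:R - d%:R - 1 : F) = 0 by rewrite -addn1 natrD; ring.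
by rewrite /rphi h mulr0 !mul0r.
Qed.

Lemma evB i : ev i *m B = rths b d i *: ev i + rphi a b c d i *: ev i.-1.
Proof.
apply/rowP => l; rewrite !mxE.
under eq_bigr do rewrite !mxE evE.
rewrite !evE.
rewrite sum_delta; case: ltnP => hi.
  rewrite inordK //; case: i hi => [|i] hi /=.
    by rewrite rphi0 mul0r addr0; case: (_ == _); rewrite ?mulr1 ?mulr0 ?addr0.
  rewrite eqSS; case: ((l:nat) =P i.+1) => [->|_]; first by rewrite (gtn_eqF (ltnSn i)) mulr1 mulr0 !addr0.
  by case: (_ == _); rewrite ?mulr1 ?mulr0 ?addr0 ?add0r.
have -> : ((l:nat) == i) = false by apply/negbTE; rewrite neq_ltn (leq_trans (ltn_ord l) hi).
rewrite mulr0 add0r; case: ((l:nat) =P i.-1) => [hl|]; rewrite ?mulr0 //.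
have -> : i = d.+1.
  apply/eqP; rewrite eqn_leq hi andbT; case: i hi hl => //= i _ <-; exact: ltn_ord.
by rewrite rphiS mul0r.
Qed.



Lemma ev_out j : (n <= j)%N -> ev j = 0.
Proof.
move=> hj; apply/rowP => l; rewrite !mxE evE.
by have -> : ((l:nat) == j) = false by apply/negbTE; rewrite neq_ltn (leq_trans (ltn_ord l) hj).
Qed.

Definition mu (i : nat) : F := (a - rhalf F d + i%:R) * (a - rhalf F d + i%:R + 1).
Definition sig k : {poly F} := \prod_(l < k) ('X - (mu l)%:P).
Definition tau k : {poly F} := \prod_(l < k) ('X - (rth a d l)%:P).
Definition w k : 'rV[F]_n := locked_with ev_key (ev 0 *m horner_mx A (sig k)).

Lemma ev0tau k : ev 0 *m horner_mx A (tau k) = ev k.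
Proof.
elim: k => [|k IH]; first by rewrite /tau big_ord0 rmorph1 mulmx1.
rewrite /tau big_ord_recr /= rmorphM /= mulmxA -/(tau k) IH rmorphB /= horner_mx_X horner_mx_C.
by rewrite mulmxBr evA mul_mx_scalar addrC addKr.
Qed.

Lemma wS k : w k.+1 = w k *m A - mu k *: w k.
Proof.
by rewrite /w !locked_withE /sig big_ord_recr /= rmorphM /= mulmxA rmorphB /= horner_mx_X horner_mx_C mulmxBr mul_mx_scalar.
Qed.

Lemma w0 : w 0 = ev 0.
Proof. by rewrite /w !locked_withE /sig big_ord0 rmorph1 mulmx1. Qed.

Hypothesis h2 : (2%:R : F) != 0.

Lemma mu_rth l : (l <= d)%N -> mu l = rth a d (d - l).
Proof. move=> hl; rewrite /mu /rth /rhalf natrB //; by field. Qed.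

Lemma sig_tau : sig n = tau n.
Proof.
rewrite /sig /tau (reindex_inj rev_ord_inj); apply: eq_bigr => l _.
by rewrite /= subSS mu_rth ?leq_subr // subKn // -ltnS.
Qed.

Lemma w_out k : (n <= k)%N -> w k = 0.
Proof.
elim: k => [//|k IH]; rewrite leq_eqVlt => /orP [/eqP <-|hk].
  by rewrite /w locked_withE sig_tau ev0tau ev_out.
by rewrite wS IH // mul0mx scaler0 subr0.
Qed.


Definition alpha0 : F := (c - b) * (c + b + 1) * (a - rhalf F d) * (a + rhalf F d + 1).

Lemma ev_delta (k : 'I_n) : ev k = delta_mx 0 k.
Proof. by apply/rowP => l; rewrite evE !mxE eqxx. Qed.

Lemma R1 : A *m A *m B - 2%:R *: (A *m B *m A) + B *m A *m A - 2%:R *: (A *m B) - 2%:R *: (B *m A)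
  = 2%:R *: (A *m A) - (2%:R * rdelta a b c d) *: A + (2%:R * alpha0)%:M.
Proof.
apply/row_matrixP => k.
rewrite !rowE -ev_delta.
rewrite !mulmxDr ?mulmxBr ?mulmxN -!scalemxAr !mulmxA mul_mx_scalar.
case: k => [[|k] hk] /=.
  do ![rewrite ?evA ?evB ?mulmxDl ?mulmxBl ?mulNmx -?scalemxAl].
  apply/rowP => l; rewrite !mxE /rth /rths /rphi /rdelta /alpha0 /rhalf.
  by field.
do ![rewrite ?evA ?evB ?mulmxDl ?mulmxBl ?mulNmx -?scalemxAl].
apply/rowP => l; rewrite !mxE /rth /rths /rphi /rdelta /alpha0 /rhalf /=.
by field.
Qed.


Lemma wA k : w k *m A = mu k *: w k + w k.+1.
Proof. by rewrite wS addrC subrK. Qed.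

Definition vphi (i : nat) : F := i%:R * (i%:R - d%:R - 1) * (- a + b + c + rhalf F d - i%:R + 1)
   * (- a + b - c + rhalf F d - i%:R).

Lemma vphi0 : vphi 0 = 0.
Proof. by rewrite /vphi !mul0r. Qed.

Ltac fin := apply/rowP => l; rewrite !mxE /vphi /mu /alpha0 /rth /rths /rphi /rdelta /rhalf /=; by field.

Lemma wB i : w i *m B = rths b d i *: w i + vphi i *: w i.-1.
Proof.
have base0 : w 0 *m B = rths b d 0 *: w 0 + vphi 0 *: w 0.
  by rewrite w0 evB rphi0 vphi0.
have base1 : w 1 *m B = rths b d 1 *: w 1 + vphi 1 *: w 0.
  rewrite wS w0.
  do ![rewrite ?evA ?evB ?mulmxDl ?mulmxBl ?mulNmx -?scalemxAl].
  rewrite rphi0; fin.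
have base2 : w 2 *m B = rths b d 2 *: w 2 + vphi 2 *: w 1.
  rewrite !wS w0.
  do ![rewrite ?evA ?evB ?mulmxDl ?mulmxBl ?mulNmx -?scalemxAl].
  rewrite rphi0; fin.
suff H : forall i, w i.+1 *m B = rths b d i.+1 *: w i.+1 + vphi i.+1 *: w i /\
                   w i.+2 *m B = rths b d i.+2 *: w i.+2 + vphi i.+2 *: w i.+1.
  by case: i => [|i] //; case: (H i).
clear i; elim=> [|i [IH1 IH2]] //.
split=> //.
have E := congr1 (mulmx (w i.+1)) R1.
move: E; rewrite !mulmxDr ?mulmxBr ?mulmxN -!scalemxAr !mulmxA mul_mx_scalar.
do ![rewrite ?wA ?IH1 ?IH2 ?mulmxDl ?mulmxBl ?mulNmx -?scalemxAl].
move: (w i.+3 *m B) => Z.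
move/eqP; rewrite -subr_eq0 => /eqP E.
apply/eqP; rewrite -subr_eq0; apply/eqP; rewrite -E.
fin.
Qed.


Lemma mul_ec (v : 'rV[F]_n) j : (v *m ec j) 0 0 = if (j < n)%N then v 0 (inord j) else 0.
Proof.
rewrite !mxE; under eq_bigr do rewrite !mxE.
by rewrite sum_delta'.
Qed.

Lemma colB j : B *m ec j = rths b d j *: ec j + rphi a b c d j.+1 *: ec j.+1.
Proof.
apply/colP => l; rewrite !mxE; under eq_bigr do rewrite !mxE.
rewrite sum_delta'; case: ltnP => hj.
  rewrite inordK //; case: ((l:nat) =P j) => [->|hl].
    by rewrite eqxx (gtn_eqF (ltnSn j)) (ltn_eqF (ltnSn j)) /= mulr1 mulr0 !addr0.
  have -> : (j == l) = false by apply/negbTE/eqP => h; apply: hl.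
  rewrite add0r; case: ((l:nat) =P j.+1) => [->|]; first by rewrite eqxx /= mulr1n mulr1 mulr0 add0r.
  move=> hl'; have -> : (j.+1 == l) = false by apply/negbTE/eqP => h; apply: hl'.
  by rewrite /= !mulr0 addr0.
have -> : ((l:nat) == j) = false by apply/negbTE; rewrite neq_ltn (leq_trans (ltn_ord l) hj).
have -> : ((l:nat) == j.+1) = false by apply/negbTE; rewrite neq_ltn (leq_trans (ltn_ord l)) // ltnW.
by rewrite !mulr0 addr0.
Qed.

Lemma vA_entry (v : 'rV[F]_n) (l : 'I_n) :
  (v *m A) 0 l = v 0 l * rth a d l + (if (l:nat) is l'.+1 then v 0 (inord l') else 0).
Proof.
rewrite !mxE; under eq_bigr do rewrite !mxE mulrDr.
rewrite big_split /=; congr (_ + _).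
  rewrite (bigD1 l) //= eqxx big1 ?addr0 // => m hm.
  have hm' : ((l:nat) == m) = false by apply/negbTE; rewrite val_eqE eq_sym.
  by rewrite hm' mulr0.
case: l => [[|l'] hl] /=.
  by rewrite big1 // => m _; rewrite mulr0.
have hl' : (l' < n)%N by apply: ltnW.
rewrite (bigD1 (inord l')) //= inordK // eqxx mulr1 big1 ?addr0 // => m hm.
have -> : (l'.+1 == (m:nat).+1) = false.
  by apply/negbTE; rewrite eqSS; apply: contra hm => /eqP ->; rewrite inord_val.
by rewrite mulr0.
Qed.

Lemma entryB (u v : 'rV[F]_n) x l : (u - x *: v) 0 l = u 0 l - x * v 0 l.
Proof. by rewrite !mxE. Qed.

Lemma wtop k : (k <= d)%N -> forall l : 'I_n, (k <= l)%N -> w k 0 l = ((l:nat) == k)%:R.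
Proof.
elim: k => [_ l _|k IH hk l hl]; first by rewrite w0 evE.
have hk' : (k <= d)%N := ltnW hk.
rewrite wS entryB vA_entry (IH hk' l (ltnW hl)).
rewrite (gtn_eqF hl) mul0r add0r mulr0 subr0.
case: l hl => [[|l'] hl'] //= hkl.
have hl2 : (l' < n)%N := ltnW hl'.
by rewrite (IH hk' (inord l')) inordK.
Qed.

Lemma wd_neq0 : w d != 0.
Proof.
apply/negP => /eqP h; have := @wtop d (leqnn d) ord_max (leqnn d).
by rewrite h mxE eqxx => /eqP; rewrite eq_sym oner_eq0.
Qed.

Lemma ev_neq0 k : (k <= d)%N -> ev k != 0.
Proof.
move=> hk; apply/negP => /eqP h; have := evE k (inord k).
by rewrite h mxE inordK // eqxx => /eqP; rewrite eq_sym oner_eq0.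
Qed.

Lemma stable_CD (U : 'M[F]_n) : stablemx U A -> stablemx U B ->
  stablemx U (RC a b c d) /\ stablemx U (RD a b c d).
Proof.
move=> hA hB; split.
  rewrite /RC; apply: stablemxD; last by rewrite stablemxN.
  by apply: stablemxD; [exact: stablemxC| rewrite stablemxN].
rewrite /RD -mul_scalar_mx; apply: stablemxM; first exact: stablemxC.
by apply: stablemxD; [exact: stablemxM| rewrite stablemxN; exact: stablemxM].
Qed.

Lemma reducible_family (r : nat -> 'rV[F]_n) (s t q : nat -> F) (j : nat) :
  (forall k, r k *m A = s k *: r k + r k.+1) ->
  (forall k, r k *m B = t k *: r k + q k *: r k.-1) ->
  q j = 0 -> (forall k, (n <= k)%N -> r k = 0) -> r d != 0 ->
  (1 <= j <= d)%N -> ~ racah_irreducible a b c d.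
Proof.
move=> hA hB hq hout hnz /andP [hj1 hjd] irr.
pose U : 'M[F]_n := \matrix_(k < n) (if (j <= k)%N then r k else 0).
have memU m : (j <= m)%N -> (r m <= U)%MS.
  move=> hm; case: (ltnP m n) => hmn; last by rewrite hout // sub0mx.
  by apply: (eq_row_sub (inord m)); rewrite rowK inordK // hm.
have sA : stablemx U A.
  apply/row_subP => k; rewrite row_mul rowK; case: ifP => hk; last by rewrite mul0mx sub0mx.
  by rewrite hA addmx_sub ?scalemx_sub ?memU // ltnW.
have sB : stablemx U B.
  apply/row_subP => k; rewrite row_mul rowK; case: ifP => hk; last by rewrite mul0mx sub0mx.
  rewrite hB; apply: addmx_sub; first by rewrite scalemx_sub // memU.
  move: hk; rewrite leq_eqVlt => /orP [/eqP hk|hk].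
    by rewrite -hk hq scale0r sub0mx.
  by rewrite scalemx_sub // memU // -ltnS (ltn_predK hk).
have [sC sD] := stable_CD sA sB.
case: (irr U sA sB sC sD) => [U0|].
  move: hnz; have := rowK (fun k : 'I_n => if (j <= k)%N then r k else 0) (@ord_max d).
  by rewrite -/U U0 row0 /= hjd => <-; rewrite eqxx.
case/row_fullP => X /mulmx1C hX.
have := congr1 (row 0) hX; rewrite row_mul rowK /=.
have -> : (j <= 0)%N = false by rewrite leqNgt hj1.
rewrite mul0mx row1 => /rowP /(_ 0); rewrite !mxE eqxx /=.
by move/eqP; rewrite eq_sym oner_eq0.
Qed.


Lemma row_decomp (u : 'rV[F]_n) : u = \sum_(m < n) u 0 m *: ev m.
Proof.
apply/rowP => l; rewrite summxE.
under eq_bigr do rewrite mxE evE.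
rewrite (bigD1 l) //= eqxx mulr1 big1 ?addr0 // => m hm.
have -> : ((l:nat) == m) = false by apply/negbTE; rewrite val_eqE eq_sym.
by rewrite mulr0.
Qed.

Lemma wE k : w k = ev 0 *m horner_mx A (sig k).
Proof. by rewrite /w locked_withE. Qed.

Lemma sig_rec k : horner_mx A (sig k.+1) = horner_mx A (sig k) *m A - mu k *: horner_mx A (sig k).
Proof.
by rewrite /sig big_ord_recr rmorphM /= rmorphB /= horner_mx_X horner_mx_C -mulmxE mulmxBr mul_mx_scalar.
Qed.

Lemma hornerM (p q : {poly F}) : horner_mx A (p * q) = horner_mx A p *m horner_mx A q.
Proof. by rewrite rmorphM. Qed.

Lemma ev_sig m : (1 <= m)%N -> ev m *m horner_mx A (sig d) = 0.
Proof.
case: m => [//|m] _.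
rewrite -ev0tau -mulmxA -hornerM.
have -> : tau m.+1 * sig d = sig n * \prod_(i < m) ('X - (rth a d (lift ord0 i))%:P).
  rewrite /tau big_ord_recl /= [LHS]mulrC mulrA; congr (_ * _).
  rewrite /sig [in RHS]big_ord_recr /= mu_rth // subnn; congr (_ * ('X - (rth a d _)%:P)).
rewrite hornerM mulmxA -wE w_out //.
by rewrite mul0mx.
Qed.

Lemma irreducible_of
  (hphi : forall i, (1 <= i <= d)%N -> rphi a b c d i != 0)
  (hvphi : forall i, (1 <= i <= d)%N -> vphi i != 0) : racah_irreducible a b c d.
Proof.
move=> U sA sB _ _.
have cA x : (x <= U)%MS -> (x *m A <= U)%MS by move=> hx; exact: submx_trans (submxMr A hx) sA.
have cB x : (x <= U)%MS -> (x *m B <= U)%MS by move=> hx; exact: submx_trans (submxMr B hx) sB.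
have cBs x t : (x <= U)%MS -> (x *m B - t *: x <= U)%MS.
  by move=> hx; apply: addmx_sub; [exact: cB| rewrite -scaleNr scalemx_sub].
have cAs x t : (x <= U)%MS -> (x *m A - t *: x <= U)%MS.
  by move=> hx; apply: addmx_sub; [exact: cA| rewrite -scaleNr scalemx_sub].
case: (eqVneq U 0) => [->|Unz]; [by left | right].
have [r hr] : exists r, row r U != 0.
  case: (pickP (fun r => row r U != 0)) => [r hr|h]; first by exists r.
  exfalso; move/eqP: Unz; apply; apply/row_matrixP => k; rewrite row0.
  by have := h k; move/negbFE/eqP.
set v := row r U; have hv : (v <= U)%MS by exact: row_sub.
have [l hl] : exists l, v 0 l != 0.
  case: (pickP (fun l => v 0 l != 0)) => [l hl|h]; first by exists l.
  exfalso; move/eqP: hr; apply; apply/rowP => k; rewrite !mxE.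
  by have := h k; rewrite /v mxE /= => /negbFE/eqP.
have step : forall j, (j <= d)%N -> forall x : 'rV[F]_n, (x <= U)%MS ->
    exists2 u : 'rV[F]_n, (u <= U)%MS & u *m ec 0 = x *m ec j.
  move=> j0; elim: j0 => [_ x hx|j IH hj x hx]; first by exists x.
  have hp : rphi a b c d j.+1 != 0 by apply: hphi; rewrite hj.
  pose x' := (rphi a b c d j.+1)^-1 *: (x *m B - rths b d j *: x).
  have hx' : (x' <= U)%MS by rewrite scalemx_sub // cBs.
  have [u hu hue] := IH (ltnW hj) x' hx'.
  exists u => //; rewrite hue /x'.
  rewrite -scalemxAl mulmxBl -scalemxAl -mulmxA colB mulmxDr -!scalemxAr.
  move: (x *m ec j) (x *m ec j.+1) => X Y.
  apply/matrixP => i k; rewrite !mxE; by field.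
have hld : (l <= d)%N by rewrite -ltnS ltn_ord.
have [u hu hue] := step l hld v hv.
have u0 : u 0 0 != 0.
  have := congr1 (fun M : 'M_1 => M 0 0) hue; rewrite /= !mul_ec /= ltn_ord.
  have i0 : (inord 0 : 'I_n) = 0 by apply: val_inj; rewrite /= inordK.
  by rewrite inord_val i0 => ->.
have csig k x : (x <= U)%MS -> (x *m horner_mx A (sig k) <= U)%MS.
  move=> hx; elim: k => [|k IH]; first by rewrite /sig big_ord0 rmorph1 mulmx1.
  by rewrite sig_rec mulmxBr mulmxA -scalemxAr; apply: cAs.
have key : u *m horner_mx A (sig d) = u 0 0 *: w d.
  rewrite {1}(row_decomp u) mulmx_suml big_ord_recl /= -scalemxAl -wE big1 ?addr0 // => m _.
  by rewrite -scalemxAl ev_sig ?scaler0.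
have wdU : (w d <= U)%MS.
  have -> : w d = (u 0 0)^-1 *: (u *m horner_mx A (sig d)) by rewrite key scalerA mulVf ?scale1r.
  by rewrite scalemx_sub // csig.
have wU : forall k, (k <= d)%N -> (w (d - k) <= U)%MS.
  move=> k0; elim: k0 => [_|k IH hk]; first by rewrite subn0.
  have hi : (1 <= d - k <= d)%N by rewrite subn_gt0 hk leq_subr.
  have hvp := hvphi _ hi.
  have -> : w (d - k.+1) = (vphi (d - k))^-1 *: (w (d - k) *m B - rths b d (d - k) *: w (d - k)).
    by rewrite wB addrAC subrr add0r scalerA mulVf ?scale1r // subnS.
  by rewrite scalemx_sub // cBs // IH // ltnW.
have ev0U : (ev 0 <= U)%MS by have := wU d (leqnn d); rewrite subnn w0.
have evU : forall k, (ev k <= U)%MS.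
  move=> k0; elim: k0 => [//|k IH].
  have -> : ev k.+1 = ev k *m A - rth a d k *: ev k by rewrite evA addrAC subrr add0r.
  exact: cAs.
rewrite -sub1mx; apply/row_subP => k; rewrite row1 -ev_delta; exact: evU.
Qed.


Lemma main_equiv : racah_irreducible a b c d <->
  (forall i, (1 <= i <= d)%N -> rphi a b c d i != 0 /\ vphi i != 0).
Proof.
split=> [irr i hi|H].
  split; apply/eqP => h.
    exact: (@reducible_family ev (rth a d) (rths b d) (rphi a b c d) i evA evB h ev_out (ev_neq0 (leqnn d)) hi irr).
  exact: (@reducible_family w mu (rths b d) vphi i wA wB h w_out wd_neq0 hi irr).
by apply: irreducible_of => i hi; case: (H i hi).
Qed.

Lemma rphi_fac j : (j <= d.+1)%N -> rphi a b c d j = j%:R * (- (d.+1 - j)%:R)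
  * ((a + b + c + 1) - (d%:R / 2 - (d.+1 - j)%:R)) * ((a + b - c) - (d%:R / 2 - (d.+1 - j)%:R)).
Proof. move=> hj; rewrite /rphi /rhalf natrB // -addn1 natrD; by field. Qed.

Lemma vphi_fac j : (j <= d.+1)%N -> vphi j = j%:R * (- (d.+1 - j)%:R)
  * ((- a + b + c) - (d%:R / 2 - (d.+1 - j)%:R)) * (- ((a - b + c) - (d%:R / 2 - j%:R))).
Proof. move=> hj; rewrite /vphi /rhalf natrB // -addn1 natrD; by field. Qed.

End Work.

Unset Implicit Arguments.

Theorem theorem4p5 (F : closedFieldType) (hF : ~ (2 \in [pchar F])%N)
    (a b c : F) (d : nat) :
  racah_irreducible a b c d <->
  ( ([pchar F] =i pred0 \/ (forall p : nat, p \in [pchar F] -> (d < p)%N))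
    /\ (forall x : F, x \in [:: a + b + c + 1; - a + b + c; a - b + c; a + b - c] ->
          forall i : nat, (1 <= i <= d)%N -> x != d%:R / 2 - i%:R) ).
Proof.
have h2 : (2%:R : F) != 0.
  by apply/negP => h; apply: hF; rewrite inE /= h.
rewrite (main_equiv a b c d h2).
have rng i : (1 <= i <= d)%N -> (1 <= d.+1 - i <= d)%N /\ (d.+1 - (d.+1 - i) = i)%N.
  case/andP => h1 h2'; split; last by rewrite subKn // ltnW.
  by rewrite subn_gt0 ltnS h2' /= leq_subLR -addn1 addnC leq_add2r.
split=> [H|[hc hl] i hi].
  split.
    right => p hp; rewrite ltnNge; apply/negP => hpd.
    have hp1 : (1 <= p <= d)%N by rewrite hpd andbT prime_gt0 // (pcharf_prime hp).
    have [+ _] := H p hp1.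
    by rewrite /rphi (pcharf0 hp) !mul0r eqxx.
  move=> x hx i hi; apply/eqP => hxe.
  have [hj hji] := rng i hi.
  have hid : (i <= d.+1)%N by case/andP: hi => _ /leqW.
  have hjd : (d.+1 - i <= d.+1)%N by rewrite leq_subr.
  move: hx; rewrite !inE => /or4P [] /eqP hxv; rewrite hxv in hxe.
  - have [+ _] := H _ hj.
    by rewrite rphi_fac // hji hxe subrr mulr0 mul0r eqxx.
  - have [_ +] := H _ hj.
    by rewrite vphi_fac // hji hxe subrr mulr0 mul0r eqxx.
  - have [_ +] := H _ hi.
    by rewrite vphi_fac // hxe subrr oppr0 mulr0 eqxx.
  - have [+ _] := H _ hj.
    by rewrite rphi_fac // hji hxe subrr mulr0 eqxx.
have natnz k : (1 <= k <= d)%N -> (k%:R : F) != 0.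
  case/andP => hk1 hkd; case: hc => [hc0|hall].
    by rewrite ((pcharf0P F).1 hc0 k) -lt0n.
  apply/negP => hk0; have [p hp] := natf0_pchar hk1 hk0.
  have := hall p hp; have : (p %| k)%N by rewrite (dvdn_pcharf hp).
  move/(dvdn_leq hk1) => hpk hdp.
  by move: (leq_trans hpk hkd); rewrite leqNgt hdp.
have [hj hji] := rng i hi.
have hid : (i <= d.+1)%N by case/andP: hi => _ /leqW.
have nz1 := natnz _ hi; have nz2 := natnz _ hj.
have hN : - ((d.+1 - i)%:R : F) != 0 by rewrite oppr_eq0.
split.
  rewrite rphi_fac //; apply: mulf_neq0; [apply: mulf_neq0; [exact: mulf_neq0|]|].
    rewrite subr_eq0; apply: (hl _ _ _ hj); by rewrite !inE eqxx.
  rewrite subr_eq0; apply: (hl _ _ _ hj); by rewrite !inE eqxx !orbT.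
rewrite vphi_fac //; apply: mulf_neq0; [apply: mulf_neq0; [exact: mulf_neq0|]|].
  rewrite subr_eq0; apply: (hl _ _ _ hj); by rewrite !inE eqxx !orbT.
rewrite oppr_eq0 subr_eq0; apply: (hl _ _ _ hi); by rewrite !inE eqxx !orbT.
Qed.
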